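(* In the standing setting below, suppose that $0\le\rho\le\rho_m$ in $\Omega_T$ for some constant $\rho_m>1$. Then for all $(r,t)\in\Omega_T$, $$\frac{|v(r,t)|}{r}\le\beta(\rho_m-1),\qquad |\partial_r v(r,t)|\le 2\beta(\rho_m-1).$$
   Context: Standing setting. Fix constants $L>0$, $0<R_0<L$, $\beta>0$, $T>0$. Let $R\in C^1([0,T))$ with $R(0)=R_0$ and $0<R(t)<L$, and set $\Omega_T=\{(r,t): R(t)\le r\le L,\ 0\le t<T\}$. Let $\rho\ge 0$ be a classical (continuously differentiable) function on $\Omega_T$ (the matrix density), and define the pressure $P(r,t)=P(\rho(r,t))$ where $P(\rho)=\beta(\rho-1)$ for $\rho\ge1$ and $P(\rho)=0$ for $\rho<1$. Let $v(r,t)$ be a classical function on $\Omega_T$ (twice continuously differentiable in $r$) satisfying $\frac1r\partial_r(r\,\partial_r v)-\frac{v}{r^2}=\partial_r P$ for $R(t)<r<L$, with $v(L,t)=0$, $\partial_r v(R(t),t)=P(R(t),t)$, and the free-boundary law $\dot R(t)=v(R(t),t)$. Define $Q(t)=\int_{R(t)}^L y\,P(y,t)\,dy$. *)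

(* Defs.v *)
From Stdlib Require Import Reals Lra.
Open Scope R_scope.

Definition Pfun (beta rho : R) : R :=
  if Rle_dec 1 rho then beta * (rho - 1) else 0.

Definition OmegaT (L T : R) (Rb : R -> R) (r t : R) : Prop :=
  0 <= t < T /\ Rb t <= r <= L.

Definition cont_on (S : R -> Prop) (f : R -> R) : Prop :=
  forall x, S x -> forall eps, eps > 0 ->
    exists d, d > 0 /\ forall y, S y -> Rabs (y - x) < d -> Rabs (f y - f x) < eps.

Definition cont2_on (S : R -> R -> Prop) (f : R -> R -> R) : Prop :=
  forall r t, S r t -> forall eps, eps > 0 ->
    exists d, d > 0 /\ forall r' t', S r' t' -> Rabs (r' - r) < d -> Rabs (t' - t) < d ->
      Rabs (f r' t' - f r t) < eps.

(* Main.v *)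
Require Import Defs.
From Stdlib Require Import Reals Lra Psatz.
Open Scope R_scope.

Lemma mono (f f' : R -> R) a b : a <= b ->
  (forall x, a <= x <= b -> continuity_pt f x) ->
  (forall x, a < x < b -> derivable_pt_lim f x (f' x)) ->
  (forall x, a < x < b -> 0 <= f' x) -> f a <= f b.
Proof.
  intros Hab Hc Hd Hp.
  destruct (Req_dec a b) as [E|NE]; [subst; lra|].
  assert (Hlt : a < b) by lra.
  set (pr1 := fun c (P : a < c < b) => exist (fun l => derivable_pt_lim f c l) (f' c) (Hd c P)).
  set (pr2 := fun c (P : a < c < b) => derivable_pt_id c).
  destruct (MVT f id a b pr1 pr2 Hlt Hc (fun c _ => derivable_continuous_pt _ _ (derivable_pt_id c)))
    as [c [P HP]].
  unfold pr1, pr2 in HP. rewrite derive_pt_id in HP. simpl in HP. unfold id in HP.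
  specialize (Hp c P). nra.
Qed.

Lemma cont_pt_eps (f : R -> R) x :
  (forall eps, eps > 0 -> exists d, d > 0 /\ forall y, Rabs (y - x) < d -> Rabs (f y - f x) < eps) ->
  continuity_pt f x.
Proof.
  intros H eps Heps. destruct (H eps Heps) as [d [Hd Hy]].
  exists d; split; [lra|]. intros y [_ Hy2]. simpl in *. unfold Rdist in *. apply Hy; auto.
Qed.

Definition cl (a b x : R) := Rmax a (Rmin b x).

Lemma cl_in a b x : a <= b -> a <= cl a b x <= b.
Proof. intros. unfold cl, Rmax, Rmin. repeat destruct Rle_dec; lra. Qed.

Lemma cl_lip a b x y : Rabs (cl a b y - cl a b x) <= Rabs (y - x).
Proof. unfold cl, Rmax, Rmin. repeat destruct Rle_dec; unfold Rabs; repeat destruct Rcase_abs; lra. Qed.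

Lemma cl_id a b x : a <= x <= b -> cl a b x = x.
Proof. intros. unfold cl, Rmax, Rmin. repeat destruct Rle_dec; lra. Qed.

Lemma cont_cl a b g x : a <= b -> cont_on (fun y => a <= y <= b) g ->
  continuity_pt (fun y => g (cl a b y)) x.
Proof.
  intros Hab Hg. apply cont_pt_eps. intros eps He.
  destruct (Hg (cl a b x) (cl_in a b x Hab) eps He) as [d [Hd Hy]].
  exists d; split; auto. intros y Hyx. apply Hy. apply cl_in; auto.
  pose proof (cl_lip a b x y). lra.
Qed.

Lemma Pfun_lip beta x y : 0 < beta -> Rabs (Pfun beta y - Pfun beta x) <= beta * Rabs (y - x).
Proof.
  intros Hb. unfold Pfun. repeat destruct Rle_dec; unfold Rabs; repeat destruct Rcase_abs; nra.
Qed.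

Lemma cont_Pfun beta S g : 0 < beta -> cont_on S g -> cont_on S (fun y => Pfun beta (g y)).
Proof.
  intros Hb Hg x Sx eps He. destruct (Hg x Sx (eps / beta)) as [d [Hd Hy]].
  { apply Rdiv_lt_0_compat; lra. }
  exists d; split; auto. intros y Sy Hyx. specialize (Hy y Sy Hyx).
  pose proof (Pfun_lip beta (g x) (g y) Hb).
  apply Rmult_lt_compat_l with (r := beta) in Hy; [|lra].
  replace (beta * (eps / beta)) with eps in Hy by (field; lra). lra.
Qed.

Lemma Pfun_bnd beta rm r : 0 < beta -> 1 < rm -> 0 <= r <= rm -> 0 <= Pfun beta r <= beta * (rm - 1).
Proof. intros. unfold Pfun. destruct Rle_dec; nra. Qed.

Lemma dcl a b f x l : a < x < b -> derivable_pt_lim f x l -> derivable_pt_lim (fun y => f (cl a b y)) x l.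
Proof.
  intros Hx Hd. apply (derivable_pt_lim_locally_ext f _ x a b l Hx); auto.
  intros z Hz. rewrite cl_id; auto; lra.
Qed.

Lemma dlim_eq f x l l' : derivable_pt_lim f x l -> l = l' -> derivable_pt_lim f x l'.
Proof. intros H E; subst; auto. Qed.

Theorem lemma4p4
  (L R0 beta T : R) (Rb dRb : R -> R)
  (rho rho_r rho_t v dv d2v : R -> R -> R) (rho_m : R)
  (* constants *)
  (HL : 0 < L) (HR0 : 0 < R0 < L) (Hbeta : 0 < beta) (HT : 0 < T)
  (* R in C^1([0,T)), R(0) = R0, 0 < R(t) < L *)
  (HRder : forall t, 0 < t < T -> derivable_pt_lim Rb t (dRb t))
  (HRcont : cont_on (fun t => 0 <= t < T) Rb)
  (HdRcont : cont_on (fun t => 0 <= t < T) dRb)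
  (HR0val : Rb 0 = R0)
  (HRbnd : forall t, 0 <= t < T -> 0 < Rb t < L)
  (* rho >= 0 is C^1 on Omega_T *)
  (Hrho_nonneg : forall r t, OmegaT L T Rb r t -> 0 <= rho r t)
  (Hrho_r : forall r t, 0 < t < T -> Rb t < r < L ->
     derivable_pt_lim (fun y => rho y t) r (rho_r r t))
  (Hrho_t : forall r t, 0 < t < T -> Rb t < r < L ->
     derivable_pt_lim (fun s => rho r s) t (rho_t r t))
  (Hrho_c : cont2_on (OmegaT L T Rb) rho)
  (Hrho_rc : cont2_on (OmegaT L T Rb) rho_r)
  (Hrho_tc : cont2_on (OmegaT L T Rb) rho_t)
  (* v classical on Omega_T, C^2 in r on [R(t), L] *)
  (Hv_c : cont2_on (OmegaT L T Rb) v)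
  (Hv_r : forall r t, 0 <= t < T -> Rb t < r < L ->
     derivable_pt_lim (fun y => v y t) r (dv r t))
  (Hv_rr : forall r t, 0 <= t < T -> Rb t < r < L ->
     derivable_pt_lim (fun y => dv y t) r (d2v r t))
  (Hv_rc : forall t, 0 <= t < T ->
     cont_on (fun y => Rb t <= y <= L) (fun y => v y t) /\
     cont_on (fun y => Rb t <= y <= L) (fun y => dv y t) /\
     cont_on (fun y => Rb t <= y <= L) (fun y => d2v y t))
  (* the elliptic equation (1/r) d_r(r d_r v) - v/r^2 = d_r P for R(t) < r < L *)
  (Hode : forall r t, 0 <= t < T -> Rb t < r < L ->
     derivable_pt_lim (fun y => Pfun beta (rho y t)) r
       ((1 / r) * (dv r t + r * d2v r t) - v r t / r ^ 2))
  (* boundary conditions and free-boundary law *)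
  (HvL : forall t, 0 <= t < T -> v L t = 0)
  (HvR : forall t, 0 <= t < T -> dv (Rb t) t = Pfun beta (rho (Rb t) t))
  (Hfb : forall t, 0 <= t < T -> dRb t = v (Rb t) t)
  (* hypothesis of the lemma *)
  (Hrho_m : 1 < rho_m)
  (Hrho_bnd : forall r t, OmegaT L T Rb r t -> 0 <= rho r t <= rho_m) :
  forall r t, OmegaT L T Rb r t ->
    Rabs (v r t) / r <= beta * (rho_m - 1) /\
    Rabs (dv r t) <= 2 * beta * (rho_m - 1).
Proof.
  intros r t [Ht [Hr1 Hr2]].
  set (a := Rb t). set (M := beta * (rho_m - 1)).
  assert (Ha : 0 < a < L) by (apply HRbnd; auto).
  assert (HM : 0 < M) by (unfold M; nra).
  assert (Hab : a <= L) by lra.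
  destruct (Hv_rc t Ht) as [Cv [Cdv _]].
  assert (Crho : cont_on (fun y => a <= y <= L) (fun y => rho y t)).
  { intros x Sx eps He. destruct (Hrho_c x t (conj Ht Sx) eps He) as [d [Hd Hy]].
    exists d; split; auto. intros y Sy Hyx. apply Hy; auto. split; auto.
    rewrite Rminus_diag, Rabs_R0; lra. }
  pose proof (cont_Pfun beta _ _ Hbeta Crho) as CP.
  assert (Cid : cont_on (fun y => a <= y <= L) (fun y => y)).
  { intros x _ eps He. exists eps; split; auto. }
  set (Vt := fun y => v (cl a L y) t).
  set (Dt := fun y => dv (cl a L y) t).
  set (Pt := fun y => Pfun beta (rho (cl a L y) t)).
  set (Ct := fun y => cl a L y).
  assert (cVt : forall x, continuity_pt Vt x) by (intro x; exact (cont_cl a L (fun y => v y t) x Hab Cv)).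
  assert (cDt : forall x, continuity_pt Dt x) by (intro x; exact (cont_cl a L (fun y => dv y t) x Hab Cdv)).
  assert (cPt : forall x, continuity_pt Pt x) by (intro x; exact (cont_cl a L (fun y => Pfun beta (rho y t)) x Hab CP)).
  assert (cCt : forall x, continuity_pt Ct x) by (intro x; exact (cont_cl a L (fun y => y) x Hab Cid)).
  assert (Ctpos : forall x, Ct x <> 0).
  { intro x. unfold Ct. pose proof (cl_in a L x Hab). lra. }
  set (W := fun y => Dt y + Vt y / Ct y - Pt y).
  assert (cW : forall x, continuity_pt W x).
  { intro x. apply (continuity_pt_minus (fun y => Dt y + Vt y / Ct y) Pt); auto.
    apply (continuity_pt_plus Dt (fun y => Vt y / Ct y)); auto.
    apply (continuity_pt_div Vt Ct); auto. }
  assert (dW : forall x, a < x < L -> derivable_pt_lim W x 0).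
  { intros x Hx. unfold W, Dt, Vt, Ct, Pt.
    apply (dcl a L (fun y => dv y t + v y t / y - Pfun beta (rho y t))); auto.
    assert (Hx0 : x <> 0) by lra.
    eapply dlim_eq.
    - apply (derivable_pt_lim_minus (fun y => dv y t + v y t / y) (fun y => Pfun beta (rho y t))).
      + apply (derivable_pt_lim_plus (fun y => dv y t) (fun y => v y t / y)).
        * apply Hv_rr; auto.
        * exact (derivable_pt_lim_div (fun y => v y t) (fun y => y) x _ _ (Hv_r x t Ht Hx) (derivable_pt_lim_id x) Hx0).
      + apply Hode; auto.
    - cbv beta; unfold Rsqr; field; auto. }
  assert (Wc : forall y, a <= y <= L -> W y = W a).
  { intros y Hy. apply Rle_antisym.
    - pose proof (mono (fun x => - W x) (fun _ => 0) a y (proj1 Hy)) as Hm.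
      enough (- W a <= - W y) by lra. apply Hm.
      + intros; apply continuity_pt_opp; auto.
      + intros x Hx. eapply dlim_eq. apply derivable_pt_lim_opp. apply dW; lra. ring.
      + intros; lra.
    - apply (mono W (fun _ => 0) a y (proj1 Hy)); auto. intros; apply dW; lra. intros; lra. }
  set (c := v a t / a).
  assert (Wa : W a = c).
  { unfold W, Dt, Vt, Ct, Pt, c. rewrite cl_id by lra. unfold a. rewrite HvR by auto. ring. }
  assert (dvE : forall y, a <= y <= L -> dv y t = Pfun beta (rho y t) + c - v y t / y).
  { intros y Hy. pose proof (Wc y Hy) as E. rewrite Wa in E. unfold W, Dt, Vt, Ct, Pt in E.
    rewrite cl_id in E by auto. lra. }
  assert (Pb : forall y, a <= y <= L -> 0 <= Pfun beta (rho y t) <= M).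
  { intros y Hy. apply Pfun_bnd; auto. apply Hrho_bnd. split; auto. }
  set (Hh := fun y => Ct y * Vt y - c * (Ct y * Ct y + a * a) / 2).
  assert (cH : forall x, continuity_pt Hh x).
  { intro x. apply (continuity_pt_minus (fun y => Ct y * Vt y) (fun y => c * (Ct y * Ct y + a * a) / 2)).
    - apply (continuity_pt_mult Ct Vt); auto.
    - apply (continuity_pt_div (fun y => c * (Ct y * Ct y + a * a)) (fun _ => 2)).
      + apply (continuity_pt_mult (fun _ => c) (fun y => Ct y * Ct y + a * a)).
        * apply continuity_pt_const. intros u w; auto.
        * apply (continuity_pt_plus (fun y => Ct y * Ct y) (fun _ => a * a)).
          -- apply (continuity_pt_mult Ct Ct); auto.
          -- apply continuity_pt_const. intros u w; auto.
      + apply continuity_pt_const. intros u w; auto.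
      + lra. }
  assert (dH : forall x, a < x < L -> derivable_pt_lim Hh x (x * Pfun beta (rho x t))).
  { intros x Hx. unfold Hh, Vt, Ct.
    apply (dcl a L (fun y => y * v y t - c * (y * y + a * a) / 2)); auto.
    eapply dlim_eq.
    - apply (derivable_pt_lim_minus (fun y => y * v y t) (fun y => c * (y * y + a * a) / 2)).
      + apply (derivable_pt_lim_mult (fun y => y) (fun y => v y t)).
        * apply derivable_pt_lim_id.
        * apply Hv_r; auto.
      + apply (derivable_pt_lim_div (fun y => c * (y * y + a * a)) (fun _ => 2)).
        * apply (derivable_pt_lim_mult (fun _ => c) (fun y => y * y + a * a)).
          -- apply derivable_pt_lim_const.
          -- apply (derivable_pt_lim_plus (fun y => y * y) (fun _ => a * a)).
             ++ apply (derivable_pt_lim_mult (fun y => y) (fun y => y)); apply derivable_pt_lim_id.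
             ++ apply derivable_pt_lim_const.
        * apply derivable_pt_lim_const.
        * lra.
    - cbv beta. unfold Rsqr. rewrite (dvE x) by lra. field. lra. }
  assert (Hha : Hh a = 0).
  { unfold Hh, Vt, Ct, c. rewrite cl_id by lra. field. lra. }
  assert (hb : forall y, a <= y <= L -> 0 <= Hh y <= M * (y * y - a * a) / 2).
  { intros y Hy. split.
    - rewrite <- Hha. apply (mono Hh (fun x => x * Pfun beta (rho x t)) a y (proj1 Hy)); auto.
      + intros; apply dH; lra.
      + intros x Hx. pose proof (Pb x ltac:(lra)). nra.
    - pose proof (mono (fun x => M * (Ct x * Ct x) / 2 - Hh x)
                    (fun x => M * x - x * Pfun beta (rho x t)) a y (proj1 Hy)) as Hm.
      simpl in Hm. unfold Ct in Hm. rewrite !cl_id in Hm by lra. rewrite Hha in Hm.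
      assert (M * (a * a) / 2 - 0 <= M * (y * y) / 2 - Hh y); [|lra].
      apply Hm.
      + intros x _. apply (continuity_pt_minus (fun x => M * (Ct x * Ct x) / 2) Hh); auto.
        apply (continuity_pt_div (fun x => M * (Ct x * Ct x)) (fun _ => 2)).
        * apply (continuity_pt_mult (fun _ => M) (fun x => Ct x * Ct x)).
          -- apply continuity_pt_const. intros u w; auto.
          -- apply (continuity_pt_mult Ct Ct); auto.
        * apply continuity_pt_const. intros u w; auto.
        * lra.
      + intros x Hx. eapply dlim_eq.
        * apply (derivable_pt_lim_minus (fun x => M * (Ct x * Ct x) / 2) Hh); [|apply dH; lra].
          unfold Ct. apply (dcl a L (fun y => M * (y * y) / 2)); [lra|].
          apply (derivable_pt_lim_div (fun y => M * (y * y)) (fun _ => 2)).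
          -- apply (derivable_pt_lim_mult (fun _ => M) (fun y => y * y)).
             ++ apply derivable_pt_lim_const.
             ++ apply (derivable_pt_lim_mult (fun y => y) (fun y => y)); apply derivable_pt_lim_id.
          -- apply derivable_pt_lim_const.
          -- lra.
        * cbv beta; unfold Rsqr; field.
      + intros x Hx. pose proof (Pb x ltac:(lra)). nra. }
  pose proof (hb r (conj Hr1 Hr2)) as hr. pose proof (hb L (conj Hab (Rle_refl L))) as hL.
  assert (Hr1a : a <= r) by exact Hr1.
  unfold Hh, Vt, Ct in hr, hL. rewrite cl_id in hr by lra. rewrite cl_id in hL by lra.
  rewrite HvL in hL by auto.
  pose proof (dvE r (conj Hr1 Hr2)) as Ed. pose proof (Pb r (conj Hr1 Hr2)) as Pr.
  assert (Hr0 : 0 < r) by lra.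
  assert (EM : M = beta * (rho_m - 1)) by reflexivity.
  clearbody c M a.
  assert (La : L * L + a * a > 0) by nra.
  assert (cle : c <= 0).
  { destruct hL as [hL1 _]. destruct (Rle_dec c 0); auto. nra. }
  assert (cge : - M <= c).
  { destruct hL as [_ hL2]. destruct (Rle_dec (-M) c); auto.
    assert (a * a * M >= 0) by nra. nra. }
  set (q := v r t / r) in *.
  assert (Hq : v r t = q * r) by (unfold q; field; lra).
  rewrite Hq in hr.
  assert (q1 : q * (r * r) <= M * (r * r) / 2) by nra.
  assert (q2 : q * (r * r) >= c * (r * r)) by nra.
  assert (rr : r * r > 0) by nra.
  assert (q1' : q <= M / 2).
  { apply Rmult_le_reg_r with (r * r); lra. }
  assert (q2' : c <= q).
  { apply Rmult_le_reg_r with (r * r); lra. }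
  assert (E1 : Rabs (v r t) / r = Rabs q).
  { rewrite Hq, Rabs_mult, (Rabs_right r) by lra. field. lra. }
  rewrite E1, Ed. fold q. replace (2 * beta * (rho_m - 1)) with (2 * M) by (rewrite EM; ring). split; unfold Rabs; repeat destruct Rcase_abs; lra.
Qed.
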